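(* Let $(M,d)$ be a pointed metric space with $d(x,y)\in\mathbb N\cup\{0\}$ for all $x,y\in M$, and let $A\subseteq\widetilde M$ be cyclically monotonic. Then there exists $f\in B_{\mathrm{Lip}_0(M)}$ such that $f(x)\in\mathbb Z$ for all $x\in M$ and $f(m_{x,y})=1$ for all $(x,y)\in A$.
   Context: $M$ has base point $0$; $\mathrm{Lip}_0(M)$ is the real Banach space of Lipschitz $f\colon M\to\mathbb R$ with $f(0)=0$, normed by the best Lipschitz constant, with unit ball $B_{\mathrm{Lip}_0(M)}$. $\widetilde M=\{(x,y)\in M\times M:x\ne y\}$ and $f(m_{x,y})=(f(x)-f(y))/d(x,y)$. $A\subseteq\widetilde M$ is cyclically monotonic if for every finite sequence $(x_1,y_1),\dots,(x_n,y_n)\in A$, with $y_{n+1}=y_1$, $\sum_i d(x_i,y_{i+1})\ge\sum_i d(x_i,y_i)$. *)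

(* Defs.v *)
From Stdlib Require Import Reals Lra Lia List.
Open Scope R_scope.

Definition is_metric {M : Type} (d : M -> M -> R) : Prop :=
  (forall x y, 0 <= d x y) /\
  (forall x y, d x y = 0 <-> x = y) /\
  (forall x y, d x y = d y x) /\
  (forall x y z, d x z <= d x y + d y z).

Definition Mtilde {M : Type} (p : M * M) : Prop := fst p <> snd p.

(* f(m_{x,y}) = (f x - f y) / d(x,y) *)
Definition mol_eval {M : Type} (d : M -> M -> R) (f : M -> R) (x y : M) : R :=
  (f x - f y) / d x y.

Definition lip0 {M : Type} (d : M -> M -> R) (base : M) (f : M -> R) : Prop :=
  f base = 0 /\ exists L, forall x y, Rabs (f x - f y) <= L * d x y.

(* Unit ball of Lip_0(M): best Lipschitz constant <= 1, i.e. 1 is a Lipschitz constant. *)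
Definition in_unit_ball_lip0 {M : Type} (d : M -> M -> R) (base : M) (f : M -> R) : Prop :=
  lip0 d base f /\ forall x y, Rabs (f x - f y) <= d x y.

(* Sequences are 0-indexed lists; the successor of index i is (i+1) mod n. *)
Definition cyclically_monotonic {M : Type} (d : M -> M -> R)
    (A : M * M -> Prop) : Prop :=
  forall (l : list (M * M)) (p0 : M * M),
    (forall p, In p l -> A p) ->
    let n := length l in
    fold_right Rplus 0
      (map (fun i => d (fst (nth i l p0)) (snd (nth ((i + 1) mod n)%nat l p0)))
           (seq 0 n))
    >=
    fold_right Rplus 0
      (map (fun i => d (fst (nth i l p0)) (snd (nth i l p0))) (seq 0 n)).

(* Main.v *)
Require Import Defs.
From Stdlib Require Import Reals Lra Lia List.
From Stdlib Require Import ZArith.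
From Stdlib Require Import Arith Wf_nat IndefiniteDescription Classical.
Open Scope R_scope.

Definition sumR (f : nat -> R) (n : nat) : R := fold_right Rplus 0 (map f (seq 0 n)).

Lemma fr_shift (L : list R) a : fold_right Rplus a L = fold_right Rplus 0 L + a.
Proof. induction L; simpl; [lra | rewrite IHL; lra]. Qed.

Lemma sumR_S f n : sumR f (S n) = sumR f n + f n.
Proof. unfold sumR. rewrite seq_S, map_app, fold_right_app. simpl.
  rewrite fr_shift. lra. Qed.

Lemma sumR_0 f : sumR f 0 = 0.
Proof. reflexivity. Qed.

Lemma sumR_ext f g n : (forall i, (i < n)%nat -> f i = g i) -> sumR f n = sumR g n.
Proof. induction n; intros H; [reflexivity|]. rewrite !sumR_S, IHn, H; auto. Qed.

Lemma sumR_minus f g n : sumR (fun i => f i - g i) n = sumR f n - sumR g n.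
Proof. induction n; [rewrite !sumR_0; lra| rewrite !sumR_S, IHn; lra]. Qed.

Definition isZ (r : R) := exists k : Z, r = IZR k.

Lemma sumR_Z f n : (forall i, isZ (f i)) -> isZ (sumR f n).
Proof. intros H. induction n. exists 0%Z. reflexivity.
  rewrite sumR_S. destruct IHn as [a Ha]. destruct (H n) as [b Hb].
  exists (a + b)%Z. rewrite plus_IZR. lra. Qed.

Definition Sch {M : Type} (d : M -> M -> R) (base : M) (p0 : M * M)
  (l : list (M * M)) (z : M) : R :=
  sumR (fun i => d (fst (nth i l p0)) (snd (nth i l p0))
               - d (fst (nth i l p0)) (snd (nth (S i) l (base, z)))) (length l).

Lemma Sch_app {M : Type} (d : M -> M -> R) base p0 l (x y z : M) :
  Sch d base p0 (l ++ (x, y) :: nil) z = Sch d base p0 l y + d x y - d x z.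
Proof.
  unfold Sch. rewrite length_app. simpl. rewrite Nat.add_1_r, sumR_S.
  rewrite nth_middle. rewrite (nth_overflow (l ++ (x,y)::nil)).
  2: rewrite length_app; simpl; lia.
  simpl. rewrite (sumR_ext _ (fun i => d (fst (nth i l p0)) (snd (nth i l p0))
               - d (fst (nth i l p0)) (snd (nth (S i) l (base, y))))). lra.
  intros i Hi. rewrite (app_nth1 l _ p0 Hi).
  destruct (Nat.eq_dec (S i) (length l)) as [e|e].
  - rewrite e, nth_middle, (@nth_overflow _ l (length l)) by lia. reflexivity.
  - assert (Hs : (S i < length l)%nat) by lia.
    rewrite (app_nth1 l _ _ Hs). rewrite (nth_indep l (base,z) (base,y)) by lia.
    reflexivity.
Qed.

Lemma Sch_lip {M : Type} (d : M -> M -> R) base p0 l (z w : M) :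
  is_metric d -> Sch d base p0 l z <= Sch d base p0 l w + d z w.
Proof.
  intros [H0 [H1 [H2 H3]]].
  destruct l as [|a l0] using rev_ind.
  - unfold Sch, sumR. simpl. specialize (H0 z w). lra.
  - destruct a as [x y]. rewrite !Sch_app. specialize (H3 x z w). lra.
Qed.

Lemma Sch_Z {M : Type} (d : M -> M -> R) base p0 l z :
  (forall x y : M, exists n : nat, d x y = INR n) -> isZ (Sch d base p0 l z).
Proof.
  intros Hn. unfold Sch. apply sumR_Z. intros i.
  destruct (Hn (fst (nth i l p0)) (snd (nth i l p0))) as [a Ha].
  destruct (Hn (fst (nth i l p0)) (snd (nth (S i) l (base, z)))) as [b Hb].
  rewrite Ha, Hb, !INR_IZR_INZ, <- minus_IZR. eexists; reflexivity.
Qed.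

Lemma Sch_cm {M : Type} (d : M -> M -> R) base (A : M * M -> Prop) p0 rest :
  cyclically_monotonic d A -> (forall p, In p (p0 :: rest) -> A p) ->
  Sch d base p0 (p0 :: rest) (snd p0) <= 0.
Proof.
  intros Hcm Hall. specialize (Hcm (p0 :: rest) p0 Hall). cbv zeta in Hcm.
  set (l := p0 :: rest) in *.
  change (sumR (fun i => d (fst (nth i l p0)) (snd (nth ((i + 1) mod length l)%nat l p0)))
            (length l) >=
          sumR (fun i => d (fst (nth i l p0)) (snd (nth i l p0))) (length l)) in Hcm.
  unfold Sch. rewrite sumR_minus.
  rewrite (sumR_ext (fun i => d (fst (nth i l p0)) (snd (nth (S i) l (base, snd p0))))
     (fun i => d (fst (nth i l p0)) (snd (nth ((i + 1) mod length l)%nat l p0)))). lra.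
  intros i Hi. rewrite Nat.add_1_r.
  destruct (Nat.eq_dec (S i) (length l)) as [e|e].
  - rewrite e, Nat.Div0.mod_same.
    rewrite (@nth_overflow _ l (length l)) by lia. reflexivity.
  - rewrite Nat.mod_small by lia. rewrite (nth_indep l (base, snd p0) p0) by lia.
    reflexivity.
Qed.

Theorem lemma5p1 (M : Type) (d : M -> M -> R) (base : M)
  (Hd : is_metric d)
  (Hnat : forall x y : M, exists n : nat, d x y = INR n)
  (A : M * M -> Prop)
  (HA : forall p, A p -> Mtilde p)
  (Hcm : cyclically_monotonic d A) :
  exists f : M -> R,
    in_unit_ball_lip0 d base f /\
    (forall x : M, exists z : Z, f x = IZR z) /\
    (forall x y : M, A (x, y) -> mol_eval d f x y = 1).
Proof.
  destruct (classic (exists p, A p)) as [[p0 Hp0] | Hno].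
  2:{ exists (fun _ => 0). split; [split; [split; [reflexivity| exists 0]|]|split].
      - intros x y. rewrite Rminus_0_r, Rabs_R0. destruct Hd as [H0 _].
        specialize (H0 x y). lra.
      - intros x y. rewrite Rminus_0_r, Rabs_R0. destruct Hd as [H0 _]. apply H0.
      - intros x. exists 0%Z. reflexivity.
      - intros x y H. exfalso. apply Hno. eauto. }
  set (Ch := fun l => (exists rest, l = p0 :: rest) /\ (forall p, In p l -> A p)).
  set (Sc := Sch d base p0).
  assert (Hmax : forall z, exists v, (exists l, Ch l /\ Sc l z = v) /\
                                     (forall l, Ch l -> Sc l z <= v)).
  { intros z. destruct (Hnat (snd p0) z) as [m Hm].
    assert (Hb : forall l, Ch l -> Sc l z <= INR m).
    { intros l [[rest ->] Hall]. unfold Sc.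
      pose proof (Sch_lip d base p0 (p0 :: rest) z (snd p0) Hd).
      pose proof (Sch_cm d base A p0 rest Hcm Hall).
      destruct Hd as [_ [_ [Hs _]]]. rewrite Hs in H. lra. }
    assert (Hk : forall l, Ch l -> exists k, Sc l z = INR m - INR k).
    { intros l Hl. specialize (Hb l Hl). destruct (Sch_Z d base p0 l z Hnat) as [q Hq].
      fold Sc in Hq. rewrite Hq in Hb |- *. rewrite INR_IZR_INZ in Hb |- *.
      apply le_IZR in Hb. exists (Z.to_nat (Z.of_nat m - q)).
      rewrite INR_IZR_INZ, Znat.Z2Nat.id by lia. rewrite <- INR_IZR_INZ, minus_IZR, <- INR_IZR_INZ.
      lra. }
    set (P := fun k => exists l, Ch l /\ Sc l z = INR m - INR k).
    destruct (dec_inh_nat_subset_has_unique_least_element P) as [k [[Pk Hkmin] _]].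
    - intros n. apply classic.
    - assert (Ch (p0 :: nil)).
      { split. exists nil; reflexivity. intros p [<-|[]]. exact Hp0. }
      destruct (Hk _ H) as [k Hk0]. exists k. exists (p0 :: nil). auto.
    - exists (INR m - INR k). split. exact Pk.
      intros l Hl. destruct (Hk l Hl) as [k' Hk']. rewrite Hk'.
      assert (k <= k')%nat by (apply Hkmin; exists l; auto).
      apply le_INR in H. lra. }
  assert (Hg : exists g : M -> R, forall z, (exists l, Ch l /\ Sc l z = g z) /\
                                     (forall l, Ch l -> Sc l z <= g z)).
  { exists (fun z => proj1_sig (constructive_indefinite_description _ (Hmax z))).
    intros z. exact (proj2_sig (constructive_indefinite_description _ (Hmax z))). }
  clear Hmax. destruct Hg as [g Hg].
  assert (Hlip : forall x y, g x <= g y + d x y).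
  { intros x y. destruct (Hg x) as [[l [Hl <-]] _]. destruct (Hg y) as [_ Hy].
    pose proof (Sch_lip d base p0 l x y Hd). specialize (Hy l Hl). unfold Sc in *. lra. }
  assert (Hsym : forall x y, d x y = d y x) by apply Hd.
  exists (fun z => g z - g base). split; [split; [split; [lra| exists 1]|]|split].
  - intros x y. apply Rabs_le. pose proof (Hlip x y). pose proof (Hlip y x).
    rewrite (Hsym y x) in *. lra.
  - intros x y. apply Rabs_le. pose proof (Hlip x y). pose proof (Hlip y x).
    rewrite (Hsym y x) in *. lra.
  - intros x. destruct (Hg x) as [[l [Hl <-]] _]. destruct (Hg base) as [[l' [Hl' <-]] _].
    destruct (Sch_Z d base p0 l x Hnat) as [a Ha].
    destruct (Sch_Z d base p0 l' base Hnat) as [b Hb].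
    exists (a - b)%Z. unfold Sc. rewrite Ha, Hb, minus_IZR. reflexivity.
  - intros x y Hxy. unfold mol_eval.
    assert (Hge : g x >= g y + d x y).
    { destruct (Hg y) as [[l [[[rest ->] Hall] <-]] _].
      destruct (Hg x) as [_ Hx].
      assert (Ch ((p0 :: rest) ++ (x, y) :: nil)).
      { split. exists (rest ++ (x,y)::nil). reflexivity.
        intros p Hp. apply in_app_or in Hp. destruct Hp as [Hp|[<-|[]]]; auto. }
      specialize (Hx _ H). unfold Sc in Hx. rewrite Sch_app in Hx.
      destruct Hd as [_ [Hz _]]. assert (d x x = 0) by (apply Hz; reflexivity).
      unfold Sc. lra. }
    pose proof (Hlip x y).
    replace (g x - g base - (g y - g base)) with (d x y) by lra.
    apply Rinv_r. intros H0. apply (HA _ Hxy). simpl. apply Hd. exact H0.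
Qed.
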